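(* For $k\ge0$ let $(\mathfrak{S}Sym)^k$ be the span of $\{\mathcal{M}_u:u\in\mathfrak{S}^k\}$, where $\mathfrak{S}^0=\mathfrak{S}_0$ and, for $k\ge1$, $\mathfrak{S}^k=\bigsqcup_{n\ge1}\{u\in\mathfrak{S}_n: \#\mathrm{GDes}(u)=k-1\}$. Then $\mathfrak{S}Sym=\bigoplus_{k\ge0}(\mathfrak{S}Sym)^k$ is a coalgebra grading, i.e. $\Delta((\mathfrak{S}Sym)^k)\subseteq\bigoplus_{i=0}^k(\mathfrak{S}Sym)^i\otimes(\mathfrak{S}Sym)^{k-i}$, and with this grading $\mathfrak{S}Sym$ is isomorphic as a graded coalgebra to the cofree graded coalgebra $Q(V)$ on $V=(\mathfrak{S}Sym)^1$.
   Context: Permutations in one-line notation, product is composition; $\mathfrak{S}_0$ has one element. $\mathrm{GDes}(u)=\{p\in[n-1]:u_i>u_j\text{ for all }i\le p<j\}$. $\mathrm{st}(a_1,\ldots,a_m)\in\mathfrak{S}_m$ is the permutation with the same relative order as the distinct integers $a_i$; $u\times v\in\mathfrak{S}_{p+q}$ for $u\in\mathfrak{S}_p,v\in\mathfrak{S}_q$ has $(u\times v)(i)=u_i$ ($i\le p$), $(u\times v)(p+j)=p+v_j$. $\mathfrak{S}Sym$ is the Hopf algebra over $\mathbb{Q}$ with basis $\{\mathcal{F}_u:u\in\mathfrak{S}_n,n\ge0\}$, product $\mathcal{F}_u\cdot\mathcal{F}_v=\sum_\zeta\mathcal{F}_{(u\times v)\zeta^{-1}}$ over $\zeta\in\mathfrak{S}_{p+q}$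 increasing on $[1,p]$ and on $[p+1,p+q]$, coproduct $\Delta(\mathcal{F}_u)=\sum_{p=0}^n\mathcal{F}_{\mathrm{st}(u_1..u_p)}\otimes\mathcal{F}_{\mathrm{st}(u_{p+1}..u_n)}$. Weak order: $u\le v$ iff $\mathrm{Inv}(u)\subseteq\mathrm{Inv}(v)$, $\mathrm{Inv}(u)=\{(i,j):i<j,u_i>u_j\}$; Möbius function $\mu$. $\mathcal{M}_u=\sum_{v\ge u}\mu(u,v)\mathcal{F}_v$. For a vector space $V$, $Q(V)=\bigoplus_{k\ge0}V^{\otimes k}$ graded by $k$, with deconcatenation coproduct $\Delta(v_1\otimes\cdots\otimes v_k)=\sum_{i=0}^k(v_1\otimes\cdots\otimes v_i)\otimes(v_{i+1}\otimes\cdots\otimes v_k)$ and counit vanishing on $V^{\otimes k}$, $k\ge1$. *)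

(* Defs.v *)
From HB Require Import structures.
From mathcomp Require Import all_boot all_order all_algebra.
From mathcomp Require Import finmap.
From mathcomp Require Import monalg.
Set Implicit Arguments. Unset Strict Implicit. Unset Printing Implicit Defensive.
Import Order.TTheory GRing.Theory Num.Theory.

Definition is_perm (s : seq nat) : bool := perm_eq s (iota 1 (size s)).

Record Perm := MkPerm { pseq : seq nat; pseqP : is_perm pseq }.
HB.instance Definition _ := [isSub for pseq].
HB.instance Definition _ := [Choice of Perm by <:].

Definition perm0 : Perm := @MkPerm [::] erefl.

Definition psize (u : Perm) : nat := size (pseq u).

(** standardization st(a_1..a_m): rank of each a_i among the a_j (1-based);
    for distinct a_i this is always a permutation, so the default [perm0]
    of [insubd] is never used. *)
Definition st (a : seq nat) : seq nat := [seq count (fun b => b <= x)%N a | x <- a].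
Definition stP (a : seq nat) : Perm := insubd perm0 (st a).

Definition perms_of (n : nat) : seq Perm := pmap insub (permutations (iota 1 n)).

Definition inv (u : seq nat) : seq (nat * nat) :=
  [seq ij <- [seq (i, j) | i <- iota 0 (size u), j <- iota 0 (size u)]
     | (ij.1 < ij.2)%N && (nth 0 u ij.2 < nth 0 u ij.1)%N].

Definition weak_le (u v : Perm) : bool :=
  (psize u == psize v) && all (fun p => p \in inv (pseq v)) (inv (pseq u)).

(** Möbius function of the weak order on S_n:
    mu(u,u) = 1, mu(u,v) = - sum_{u <= w < v} mu(u,w) for u < v, 0 otherwise.
    The fuel |Inv v| + 1 suffices since w < v implies |Inv w| < |Inv v|. *)
Fixpoint mob_aux (fuel : nat) (u v : Perm) : rat :=
  match fuel with
  | 0 => 0%R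
  | f.+1 =>
      if u == v then 1%R
      else if weak_le u v then
        (- \sum_(w <- perms_of (psize v) | weak_le u w && weak_le w v && (w != v))
            mob_aux f u w)%R
      else 0%R
  end.
Definition mobius (u v : Perm) : rat := mob_aux (size (inv (pseq v))).+1 u v.

Notation SSym := {malg rat[Perm]}.
Notation SSym2 := {malg rat[(Perm * Perm)%type]}.

Definition F (u : Perm) : SSym := << u >>%R.

Definition M (u : Perm) : SSym :=
  (\sum_(v <- perms_of (psize u) | weak_le u v) mobius u v *: F v)%R.

Definition gdes (u : seq nat) : seq nat :=
  [seq p <- iota 1 (size u).-1 |
     all (fun a => all (fun b => b < a)%N (drop p u)) (take p u)].

Definition kdeg (u : Perm) : nat :=
  if psize u == 0%N then 0%N else (size (gdes (pseq u))).+1.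

Definition SSymGr (k : nat) (x : SSym) : Prop :=
  exists (s : seq Perm) (c : Perm -> rat),
    all (fun u => kdeg u == k) s /\ x = (\sum_(u <- s) c u *: M u)%R.

Definition lin_ext (K : choiceType) (V : lmodType rat) (f : K -> V)
  (x : {malg rat[K]}) : V := (\sum_(a <- msupp x) x@_a *: f a)%R.

Definition tens (K1 K2 : choiceType) (x : {malg rat[K1]}) (y : {malg rat[K2]})
  : {malg rat[(K1 * K2)%type]} :=
  (\sum_(a <- msupp x) \sum_(b <- msupp y) << (x@_a * y@_b) *g (a, b) >>)%R.

Definition tmap (K1 K2 L1 L2 : choiceType)
  (f : {malg rat[K1]} -> {malg rat[L1]}) (g : {malg rat[K2]} -> {malg rat[L2]})
  (z : {malg rat[(K1 * K2)%type]}) : {malg rat[(L1 * L2)%type]} :=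
  (\sum_(ab <- msupp z) z@_ab *: tens (f << ab.1 >>) (g << ab.2 >>))%R.

Definition copS_basis (u : Perm) : SSym2 :=
  (\sum_(p < (psize u).+1) << (stP (take p (pseq u)), stP (drop p (pseq u))) >>)%R.
Definition copS (x : SSym) : SSym2 := lin_ext copS_basis x.
Definition epsS (x : SSym) : rat := x@_perm0.

(** * Q(V), V = (SSym)^1, with basis {M_u : u in S^1};
    V^{(x)k} has basis the words of length k in S^1. *)
Record S1 := MkS1 { s1val : Perm; s1P : kdeg s1val == 1%N }.
HB.instance Definition _ := [isSub for s1val].
HB.instance Definition _ := [Choice of S1 by <:].

Notation QV := {malg rat[seq S1]}.
Notation QV2 := {malg rat[(seq S1 * seq S1)%type]}.

Definition copQ_basis (w : seq S1) : QV2 :=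
  (\sum_(i < (size w).+1) << (take i w, drop i w) >>)%R.
Definition copQ (x : QV) : QV2 := lin_ext copQ_basis x.
Definition epsQ (x : QV) : rat := x@_[::].

Definition QGr (k : nat) (x : QV) : Prop :=
  forall w, w \in msupp x -> size w = k.

(* Main.v *)
Require Import Defs.
From HB Require Import structures.
From mathcomp Require Import all_boot all_order all_algebra finmap monalg zify.
Set Implicit Arguments. Unset Strict Implicit. Unset Printing Implicit Defensive.
Import GRing.Theory.

Lemma mem_perms n (u : Perm) : (u \in perms_of n) = (psize u == n).
Proof.
rewrite /perms_of mem_pmap_sub mem_permutations /psize.
apply/idP/eqP => [/perm_size|]; first by rewrite size_iota.
by move=> <-; exact: (pseqP u).
Qed.

Lemma uniq_perms n : uniq (perms_of n).
Proof. exact/pmap_sub_uniq/permutations_uniq. Qed.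

Lemma is_perm_uniq s : is_perm s -> uniq s.
Proof. by move/perm_uniq => ->; exact: iota_uniq. Qed.

Lemma is_perm_mem s x : is_perm s -> (x \in s) = (0 < x <= size s).
Proof. by move/perm_mem => ->; rewrite mem_iota add1n ltnS. Qed.

Lemma count_le_iota x n : 0 < x <= n -> count (fun b => b <= x) (iota 1 n) = x.
Proof.
case/andP=> x0 xn; rewrite -(subnKC xn) iotaD count_cat.
rewrite (eq_in_count (a2 := predT)) ?count_predT ?size_iota; last first.
  by move=> y; rewrite mem_iota add1n ltnS => /andP[].
rewrite (eq_in_count (a2 := pred0)) ?count_pred0 ?addn0 //.
by move=> y; rewrite mem_iota => /andP[h _] /=; apply/negbTE; rewrite -ltnNge -add1n.
Qed.

Lemma st_perm s : is_perm s -> st s = s.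
Proof.
move=> hs; rewrite /st -[RHS]map_id; apply/eq_in_map => x xs.
rewrite (permP hs) count_le_iota //; by rewrite -(is_perm_mem _ hs).
Qed.

Lemma count_lt_mono s x y : x \in s ->
  (count (fun b => b <= y) s < count (fun b => b <= x) s) = (y < x).
Proof.
move=> xs; case: (ltnP y x) => hyx.
  elim: s xs => //= z s IH; rewrite in_cons => /orP[/eqP<-|xs].
    rewrite /= leqnn (leqNgt x y) hyx /= add0n add1n ltnS.
    by apply: sub_count => b /= h; apply: leq_trans h (ltnW hyx).
  rewrite -addnS; apply: leq_add; last exact: IH.
  by case: (leqP z y) => //= h; rewrite (leq_trans h (ltnW hyx)).
by rewrite ltnNge; apply/negbF/sub_count => b /= h; apply: leq_trans h hyx.
Qed.

Lemma size_st s : size (st s) = size s.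
Proof. exact: size_map. Qed.

Lemma nth_st s i : i < size s -> nth 0 (st s) i = count (fun b => b <= nth 0 s i) s.
Proof. by move=> hi; rewrite /st (nth_map 0). Qed.

Lemma st_lt s i j : i < size s -> j < size s ->
  (nth 0 (st s) j < nth 0 (st s) i) = (nth 0 s j < nth 0 s i).
Proof. by move=> hi hj; rewrite !nth_st // count_lt_mono // mem_nth. Qed.

Lemma st_is_perm s : uniq s -> is_perm (st s).
Proof.
move=> us; have ust : uniq (st s).
  rewrite map_inj_in_uniq // => x y xs ys /= e.
  case: (ltngtP x y) => // h.
    by move: (count_lt_mono x ys); rewrite e ltnn h.
  by move: (count_lt_mono y xs); rewrite e ltnn h.
apply: uniq_perm => //; first exact: iota_uniq.
have sub : {subset st s <= iota 1 (size (st s))}.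
  move=> z /mapP[x xs ->]; rewrite mem_iota add1n ltnS size_st; apply/andP; split.
    by rewrite -has_count; apply/hasP; exists x.
  exact: count_size.
have h : size (iota 1 (size (st s))) <= size (st s) by rewrite size_iota.
by case: (uniq_min_size ust sub h).
Qed.

Lemma val_stP s : uniq s -> pseq (stP s) = st s.
Proof. by move=> us; rewrite /stP insubdK //; exact: st_is_perm. Qed.

Lemma psize_stP s : uniq s -> psize (stP s) = size s.
Proof. by move=> us; rewrite /psize val_stP // size_st. Qed.

Lemma st_shift k s : st (map (addn k) s) = st s.
Proof.
rewrite /st -map_comp; apply: eq_map => x /=; rewrite count_map.
by apply: eq_count => y /=; rewrite leq_add2l.
Qed.

Lemma st_cat s1 s2 : (forall x y, x \in s1 -> y \in s2 -> y < x) ->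
  st (s1 ++ s2) = map (addn (size s2)) (st s1) ++ st s2.
Proof.
move=> h; rewrite /st map_cat -!map_comp; congr (_ ++ _); apply/eq_in_map => x xs /=.
  rewrite count_cat addnC; congr (_ + _).
  rewrite -[RHS]count_predT; apply: eq_in_count => y ys /=.
  exact: ltnW (h _ _ xs ys).
rewrite count_cat (eq_in_count (a2 := pred0)) ?count_pred0 //.
by move=> y ys /=; apply/negbTE; rewrite -ltnNge h.
Qed.

Definition ovl (a b : seq nat) := map (addn (size b)) a ++ b.

Lemma size_ovl a b : size (ovl a b) = size a + size b.
Proof. by rewrite size_cat size_map. Qed.

Lemma ovl_perm a b : is_perm a -> is_perm b -> is_perm (ovl a b).
Proof.
move=> ha hb; rewrite /is_perm size_ovl addnC iotaD perm_catC.
apply: perm_cat => //; rewrite -addnC iotaDl.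
by apply: perm_map.
Qed.

Definition ovlP (a b : Perm) : Perm := MkPerm (ovl_perm (pseqP a) (pseqP b)).

Lemma psize_ovlP a b : psize (ovlP a b) = psize a + psize b.
Proof. exact: size_ovl. Qed.

Lemma nth_ovl a b i : nth 0 (ovl a b) i =
  if i < size a then nth 0 a i + size b else nth 0 b (i - size a).
Proof.
rewrite nth_cat size_map; case: ifP => // hi.
by rewrite (nth_map 0) // addnC.
Qed.

Lemma st_take_ovl a b : is_perm a -> st (take (size a) (ovl a b)) = a.
Proof. by move=> ha; rewrite take_size_cat ?size_map // st_shift st_perm. Qed.

Lemma st_drop_ovl a b : is_perm b -> st (drop (size a) (ovl a b)) = b.
Proof. by move=> hb; rewrite drop_size_cat ?size_map // st_perm. Qed.

Definition gd (s : seq nat) p := all (fun a => all (fun b => b < a) (drop p s)) (take p s).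

Lemma ovl_gd w p : is_perm w -> gd w p ->
  ovl (st (take p w)) (st (drop p w)) = w.
Proof.
move=> hw g; rewrite /ovl size_st -st_cat ?cat_take_drop ?st_perm //.
move=> x y xt yd; move/allP: g => /(_ x xt) /allP; exact.
Qed.

Lemma ovlA a b c : ovl (ovl a b) c = ovl a (ovl b c).
Proof.
rewrite /ovl map_cat -catA -map_comp size_cat size_map; congr (_ ++ _).
by apply: eq_map => x /=; rewrite addnA [size c + _]addnC.
Qed.

Lemma ovl0s b : ovl [::] b = b. Proof. by []. Qed.
Lemma ovls0 a : ovl a [::] = a.
Proof. by rewrite /ovl cats0 /= -[RHS]map_id; apply: eq_map. Qed.

Lemma gdP s p : p <= size s ->
  reflect (forall i j, i < p -> p <= j < size s -> nth 0 s j < nth 0 s i) (gd s p).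
Proof.
move=> hp; apply: (iffP (all_nthP 0)).
  move=> h i j ip /andP[pj js]; move: (h i); rewrite size_take_min (minn_idPl hp) => /(_ ip).
  rewrite nth_take // => /all_nthP => /(_ 0 (j - p)); rewrite nth_drop subnKC //.
  by apply; rewrite size_drop ltn_sub2r // (leq_ltn_trans pj js).
move=> h i; rewrite size_take_min (minn_idPl hp) => ip; rewrite nth_take //.
apply/(all_nthP 0) => j; rewrite size_drop nth_drop => jl.
by apply: h => //; rewrite leq_addr /= -ltn_subRL.
Qed.

Lemma gd_ovl_l a b p : is_perm a -> is_perm b -> p <= size a ->
  gd (ovl a b) p = gd a p.
Proof.
move=> ha hb hp; have hp' : p <= size (ovl a b) by rewrite size_ovl (leq_trans hp) ?leq_addr.
apply/(gdP hp')/(gdP hp) => h i j ip /andP[pj js].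
  move: (h i j ip); rewrite pj size_ovl (leq_trans js) ?leq_addr // !nth_ovl js.
  by rewrite (leq_trans ip hp) ltn_add2r; apply.
have ia : i < size a by apply: leq_trans ip hp.
rewrite !nth_ovl ia; case: ifP => ja.
  by rewrite ltn_add2r; apply: h => //; rewrite pj.
have : nth 0 b (j - size a) \in b.
  by apply: mem_nth; rewrite ltn_subLR; [rewrite -size_ovl | rewrite leqNgt ja].
rewrite is_perm_mem // => /andP[_ h1].
have : nth 0 a i \in a by apply: mem_nth.
rewrite is_perm_mem // => /andP[h2 _].
by rewrite (leq_ltn_trans h1) // -addn1 addnC leq_add2r.
Qed.
Lemma gd_ovl_r a b q : is_perm a -> is_perm b -> q <= size b ->
  gd (ovl a b) (size a + q) = gd b q.
Proof.
move=> ha hb hq; have hp' : size a + q <= size (ovl a b) by rewrite size_ovl leq_add2l.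
apply/(gdP hp')/(gdP hq) => h i j.
  move=> iq /andP[qj jb]; move: (h (size a + i) (size a + j)).
  rewrite !nth_ovl ltn_add2l iq leq_add2l qj size_ovl ltn_add2l jb.
  by rewrite !ltnNge !leq_addr /= !addKn; apply.
move=> iq /andP[qj jn]; rewrite !nth_ovl.
have ja : (j < size a) = false.
  by apply/negbTE; rewrite -leqNgt (leq_trans (leq_addr q _) qj).
rewrite ja; case: ifP => ia.
  have : nth 0 b (j - size a) \in b.
    by apply: mem_nth; rewrite ltn_subLR; [rewrite -size_ovl | rewrite leqNgt ja].
  rewrite is_perm_mem // => /andP[_ h1].
  have : nth 0 a i \in a by apply: mem_nth.
  rewrite is_perm_mem // => /andP[h2 _].
  by rewrite (leq_ltn_trans h1) // -addn1 addnC leq_add2r.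
have ai : size a <= i by rewrite leqNgt ia.
apply: h; first by rewrite ltn_subLR.
have aj : size a <= j by rewrite leqNgt ja.
by rewrite leq_subRL // qj /= ltn_subLR // -size_ovl.
Qed.

Lemma gd0 s : gd s 0. Proof. by rewrite /gd take0. Qed.
Lemma gdn s : gd s (size s).
Proof. by rewrite /gd drop_size; apply/allP. Qed.

Lemma mem_inv s i j : ((i, j) \in Defs.inv s) =
  [&& i < j, j < size s & nth 0 s j < nth 0 s i].
Proof.
rewrite /Defs.inv mem_filter /=.
have -> : (i, j) \in [seq (x, y) | x <- iota 0 (size s), y <- iota 0 (size s)] =
   (i < size s) && (j < size s).
  apply/allpairsP/andP => [[[x y] /= [hx hy [-> ->]]]|[hi hj]].
    by move: hx hy; rewrite !mem_iota.
  by exists (i, j); rewrite !mem_iota.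
case: (ltnP i j) => //= ij; case: (ltnP j (size s)) => js; rewrite ?andbF ?andbT //.
by rewrite (ltn_trans ij js) andbC.
Qed.

Definition ple (u v : seq nat) := forall i j, i < j -> j < size u ->
  nth 0 u j < nth 0 u i -> nth 0 v j < nth 0 v i.

Lemma weak_leP u v : reflect (psize u = psize v /\ ple (pseq u) (pseq v)) (weak_le u v).
Proof.
rewrite /weak_le; apply: (iffP andP) => [[/eqP e /allP h]|[e h]]; split => //.
  move=> i j ij ju ltu; have := h (i, j); rewrite !mem_inv ij ju ltu -/(psize v) -e ju /=.
  by apply.
  by apply/eqP.
apply/allP => [[i j]]; rewrite !mem_inv => /and3P[ij ju ltu].
by rewrite ij -/(psize v) -e ju /= (h i j).
Qed.

Lemma weak_le_refl u : weak_le u u.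
Proof. by apply/weak_leP; split. Qed.

Lemma weak_le_trans u v w : weak_le u v -> weak_le v w -> weak_le u w.
Proof.
move=> /weak_leP[e1 h1] /weak_leP[e2 h2]; apply/weak_leP; split; first by rewrite e1.
move=> i j ij ju lt; apply: h2 => //; first by rewrite -/(psize v) -e1.
exact: h1.
Qed.

Lemma weak_le_size u v : weak_le u v -> psize u = psize v.
Proof. by case/weak_leP. Qed.

Lemma perm_nthE (u : Perm) i : i < psize u ->
  nth 0 (pseq u) i = count (fun j => ~~ (nth 0 (pseq u) i < nth 0 (pseq u) j)) (iota 0 (psize u)).
Proof.
move=> hi; rewrite -{1}(st_perm (pseqP u)) nth_st //.
have -> : count (fun b => b <= nth 0 (pseq u) i) (pseq u) =
  count (fun b => b <= nth 0 (pseq u) i) (mkseq (nth 0 (pseq u)) (psize u)) by rewrite mkseq_nth.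
rewrite /mkseq count_map.
by apply: eq_count => j /=; rewrite leqNgt.
Qed.

Lemma lt_neqC (a b : nat) : a != b -> (a < b) = ~~ (b < a).
Proof. by move=> n; rewrite ltnNge leq_eqVlt eq_sym (negbTE n). Qed.

Lemma weak_le_antisym u v : weak_le u v -> weak_le v u -> u = v.
Proof.
move=> /weak_leP[e h1] /weak_leP[_ h2]; apply/val_inj/(@eq_from_nth _ 0) => // i hi.
have hv : forall k, k < psize u -> k < size (pseq v) by move=> k; rewrite -/(psize v) -e.
have key : forall j, j < psize u -> (nth 0 (pseq u) i < nth 0 (pseq u) j) =
                                 (nth 0 (pseq v) i < nth 0 (pseq v) j).
  move=> j hj; case: (ltngtP i j) => [ij|ji|<-]; last by rewrite !ltnn.
  - have uu := is_perm_uniq (pseqP u); have uv := is_perm_uniq (pseqP v).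
    have nu : nth 0 (pseq u) i != nth 0 (pseq u) j by rewrite nth_uniq // (ltn_eqF ij).
    have nv : nth 0 (pseq v) i != nth 0 (pseq v) j by rewrite nth_uniq ?hv // (ltn_eqF ij).
    rewrite (lt_neqC nu) (lt_neqC nv); congr (~~ _).
    apply/idP/idP => lt; first exact: h1.
    by apply: h2 => //; apply: hv.
  - apply/idP/idP => lt; first exact: h1.
    by apply: h2 => //; apply: hv.
rewrite (perm_nthE hi) (perm_nthE (u:=v)) -/(psize v) -?e //.
by apply: eq_in_count => j; rewrite mem_iota add0n => /key ->.
Qed.

Lemma inv_uniq s : uniq (Defs.inv s).
Proof.
apply: filter_uniq; apply: allpairs_uniq; try exact: iota_uniq.
by move=> [a b] [c d] _ _ /= [-> ->].
Qed.

Lemma weak_le_lt u v : weak_le u v -> u != v ->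
  size (Defs.inv (pseq u)) < size (Defs.inv (pseq v)).
Proof.
move=> le neq; have sub : {subset Defs.inv (pseq u) <= Defs.inv (pseq v)}.
  by move/andP: le => [_ /allP].
rewrite ltn_neqAle uniq_leq_size ?inv_uniq // andbT.
apply/negP => /eqP esz; have h : size (Defs.inv (pseq v)) <= size (Defs.inv (pseq u)) by rewrite esz.
have [_ eqi] := uniq_min_size (inv_uniq _) sub h.
move/negP: neq; apply; apply/eqP/weak_le_antisym => //.
apply/andP; split; first by rewrite eq_sym; apply/eqP/weak_le_size.
by apply/allP => x; rewrite -eqi.
Qed.
Lemma perm_nth_bd s i : is_perm s -> i < size s -> 0 < nth 0 s i <= size s.
Proof. by move=> hs hi; rewrite -(is_perm_mem _ hs) mem_nth. Qed.

Lemma ovl_cross a b i j : is_perm a -> is_perm b -> i < size a -> size a <= j ->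
  j < size a + size b -> nth 0 (ovl a b) j < nth 0 (ovl a b) i.
Proof.
move=> ha hb ia aj jn; have ja : (j < size a) = false by rewrite ltnNge aj.
rewrite !nth_ovl ia ja.
have hj : j - size a < size b by rewrite ltn_subLR.
have /andP[_ h1] := perm_nth_bd hb hj.
have /andP[h2 _] := perm_nth_bd ha ia.
by rewrite (leq_ltn_trans h1) // -addn1 addnC leq_add2r.
Qed.

Lemma weak_le_ovl (u a b : Perm) : psize u = psize a + psize b ->
  weak_le u (ovlP a b) = weak_le (stP (take (psize a) (pseq u))) a &&
                         weak_le (stP (drop (psize a) (pseq u))) b.
Proof.
move=> hu; have uu := is_perm_uniq (pseqP u).
have ut : uniq (take (psize a) (pseq u)) by apply: take_uniq.
have ud : uniq (drop (psize a) (pseq u)) by apply: drop_uniq.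
have szt : size (take (psize a) (pseq u)) = psize a.
  by rewrite size_takel // -/(psize u) hu leq_addr.
have szd : size (drop (psize a) (pseq u)) = psize b.
  by rewrite size_drop -/(psize u) hu addKn.
have ha := pseqP a; have hb := pseqP b.
apply/weak_leP/andP => [[_ h]|[/weak_leP[e1 h1] /weak_leP[e2 h2]]].
  split; apply/weak_leP; split.
  - by rewrite psize_stP.
  - rewrite /ple val_stP // size_st szt => i j ij ja.
    have ia := ltn_trans ij ja.
    rewrite st_lt ?szt // !nth_take // => lt.
    have := h i j ij; rewrite -/(psize u) hu (leq_trans ja (leq_addr _ _)) => /(_ isT lt).
    by rewrite /= !nth_ovl ia ja ltn_add2r.
  - by rewrite psize_stP.
  - rewrite /ple val_stP // size_st szd => i j ij jb.
    have ib := ltn_trans ij jb.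
    rewrite st_lt ?szd // !nth_drop => lt.
    have := h (psize a + i) (psize a + j); rewrite ltn_add2l ij -/(psize u) hu ltn_add2l jb.
    move=> /(_ isT isT lt); rewrite /= !nth_ovl.
    by rewrite !ltnNge !leq_addr /= !addKn.
split; first by rewrite psize_ovlP.
move: h1 h2; rewrite /ple !val_stP // !size_st szt szd => h1 h2.
move=> i j ij; rewrite -/(psize u) hu => jn lt.
case: (ltnP j (psize a)) => ja.
  have ia := ltn_trans ij ja.
  have := h1 i j ij ja; rewrite st_lt ?szt // !nth_take // => /(_ lt).
  by rewrite /= !nth_ovl ia ja ltn_add2r.
case: (ltnP i (psize a)) => ia.
  exact: ovl_cross.
have := h2 (i - psize a) (j - psize a).
rewrite ltn_sub2r ?(leq_trans ia (ltnW ij)) //; last by apply: leq_ltn_trans ia ij.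
move=> /(_ isT); rewrite ltn_subLR // => /(_ jn).
rewrite st_lt ?szd ?ltn_subLR ?(ltn_trans ij) // !nth_drop !subnKC // => /(_ lt).
have ia' : (i < psize a) = false by rewrite ltnNge ia.
have ja' : (j < psize a) = false by rewrite ltnNge ja.
by rewrite /= !nth_ovl ia' ja'.
Qed.
Section Mob.
Local Open Scope ring_scope.

Lemma bigD1P (V : nmodType) (I : eqType) (r : seq I) (j : I) (P : pred I) (F : I -> V) :
  j \in r -> uniq r -> P j ->
  \sum_(i <- r | P i) F i = F j + \sum_(i <- r | P i && (i != j)) F i.
Proof.
move=> jr ur Pj; rewrite big_mkcond (bigD1_seq j) //= Pj; congr (_ + _).
rewrite [RHS]big_mkcond [LHS]big_mkcond; apply: eq_bigr => i _.
by case: (P i); case: (i != j).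
Qed.

Lemma mob_fuel f g u w : (size (Defs.inv (pseq w)) < f)%N -> (size (Defs.inv (pseq w)) < g)%N ->
  mob_aux f u w = mob_aux g u w.
Proof.
elim: f g w => [//|f IH] [//|g] w hf hg /=.
case: (u == w) => //; case: (weak_le u w) => //; congr (- _).
apply: eq_bigr => w' /andP[/andP[_ le] neq].
have lt := weak_le_lt le neq.
by apply: IH; apply: leq_trans lt _.
Qed.

Lemma mobius_unfold u v : mobius u v =
  if u == v then 1 else if weak_le u v then
   - \sum_(w <- perms_of (psize v) | weak_le u w && weak_le w v && (w != v)) mobius u w
  else 0.
Proof.
rewrite /mobius /=; case: (u == v) => //; case: (weak_le u v) => //; congr (- _).
apply: eq_bigr => w /andP[/andP[_ le] neq].
have lt := weak_le_lt le neq.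
exact: (mob_fuel u lt (ltnSn _)).
Qed.

Lemma mobius_rec u v : weak_le u v ->
  \sum_(w <- perms_of (psize v) | weak_le u w && weak_le w v) mobius u w = (u == v)%:R.
Proof.
move=> le; have vin : v \in perms_of (psize v) by rewrite mem_perms.
rewrite (bigD1P _ vin) ?uniq_perms ?le ?weak_le_refl //=.
case: eqP => [<-|/eqP neq].
  rewrite mobius_unfold eqxx big1 ?addr0 // => w /andP[/andP[l1 l2] n].
  by move: n; rewrite (weak_le_antisym l2 l1) eqxx.
by rewrite mobius_unfold (negbTE neq) le addNr.
Qed.

Lemma mobius0 u v : ~~ weak_le u v -> mobius u v = 0.
Proof.
move=> h; rewrite mobius_unfold (negbTE h); case: eqP => // e.
by move: h; rewrite e weak_le_refl.
Qed.

End Mob.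
Lemma gdesE s : gdes s = filter (gd s) (iota 1 (size s).-1).
Proof. by []. Qed.

Lemma kdeg_count (u : Perm) :
  kdeg u = (count (gd (pseq u)) (iota 0 (psize u).+1)).-1.
Proof.
rewrite /kdeg /psize gdesE.
have := gdn (pseq u); have := gd0 (pseq u).
case: (size (pseq u)) => [|m] h0 hn; first by rewrite /= h0.
have e : iota 0 m.+2 = 0 :: iota 1 m.+1 by [].
have e1 : iota 1 m.+1 = iota 1 m ++ [:: m.+1] by rewrite -[RHS]/(iota 1 m ++ iota (1 + m) 1) -iotaD addn1.
rewrite e e1 -[(0 :: _)]cat1s !count_cat /= h0 hn size_filter addn0 add1n addn1.
by [].
Qed.
Lemma kdeg1P (c : Perm) :
  reflect (0 < psize c /\ forall q, 0 < q < psize c -> ~~ gd (pseq c) q) (kdeg c == 1).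
Proof.
rewrite /kdeg; case: (psize c =P 0) => [e|/eqP ne].
  by constructor; rewrite e => -[].
have ps : (size (pseq c)).-1.+1 = size (pseq c) by rewrite prednK // lt0n.
rewrite eqSS size_eq0 gdesE -[filter _ _ == [::]]negbK -has_filter.
apply: (iffP hasPn) => [h|[_ h]].
  split; first by rewrite lt0n.
  by move=> q /andP[q0 qc]; apply: h; rewrite mem_iota add1n q0 /= ps.
by move=> q; rewrite mem_iota add1n ps => /andP[q0 qn]; apply: h; rewrite q0.
Qed.

Definition glue (ws : seq S1) : Perm := foldr (fun c acc => ovlP (s1val c) acc) perm0 ws.

Lemma psize_glue_cons c ws : psize (glue (c :: ws)) = psize (s1val c) + psize (glue ws).
Proof. exact: psize_ovlP. Qed.

Lemma s1_pos (c : S1) : 0 < psize (s1val c).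
Proof. by case/kdeg1P: (s1P c). Qed.

Lemma s1_nogd (c : S1) q : 0 < q < psize (s1val c) -> ~~ gd (pseq (s1val c)) q.
Proof. by case/kdeg1P: (s1P c) => _; apply. Qed.

Lemma gd_glue_lo c ws q : 0 < q < psize (s1val c) -> ~~ gd (pseq (glue (c :: ws))) q.
Proof.
move=> hq; rewrite /= gd_ovl_l ?pseqP ?s1_nogd //.
by case/andP: hq => _ /ltnW.
Qed.

Lemma gd_glue_at c ws : gd (pseq (glue (c :: ws))) (psize (s1val c)).
Proof.
have := gd_ovl_r (q := 0) (pseqP (s1val c)) (pseqP (glue ws)) (leq0n _).
by rewrite addn0 gd0 /= => ->.
Qed.

Lemma perm_take_uniq (u : Perm) p : uniq (take p (pseq u)).
Proof. exact/take_uniq/is_perm_uniq/pseqP. Qed.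
Lemma perm_drop_uniq (u : Perm) p : uniq (drop p (pseq u)).
Proof. exact/drop_uniq/is_perm_uniq/pseqP. Qed.

Lemma stP_take_ovlP (a b : Perm) : stP (take (psize a) (pseq (ovlP a b))) = a.
Proof. by apply/val_inj; rewrite [LHS]val_stP ?perm_take_uniq //= st_take_ovl // pseqP. Qed.

Lemma stP_drop_ovlP (a b : Perm) : stP (drop (psize a) (pseq (ovlP a b))) = b.
Proof. by apply/val_inj; rewrite [LHS]val_stP ?perm_drop_uniq //= st_drop_ovl // pseqP. Qed.

Lemma ovlP_gd (u : Perm) p : gd (pseq u) p ->
  ovlP (stP (take p (pseq u))) (stP (drop p (pseq u))) = u.
Proof.
move=> g; apply/val_inj; rewrite /= !val_stP ?perm_take_uniq ?perm_drop_uniq //.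
exact: ovl_gd (pseqP u) g.
Qed.

Lemma psize0 (u : Perm) : psize u = 0 -> u = perm0.
Proof. by case: u => s hs h; apply/val_inj => /=; apply/nilP; rewrite /nilp -[size s]/(psize (MkPerm hs)) h. Qed.

Lemma glue_inj : injective glue.
Proof.
elim=> [|c r IH] [|c' r'] //.
- move/(congr1 psize); rewrite psize_glue_cons (_ : psize (glue [::]) = 0) // => /esym/eqP.
  by rewrite addn_eq0 => /andP[/eqP h _]; move: (s1_pos c'); rewrite h.
- move/(congr1 psize); rewrite psize_glue_cons (_ : psize (glue [::]) = 0) // => /eqP.
  by rewrite addn_eq0 => /andP[/eqP h _]; move: (s1_pos c); rewrite h.
move=> e.
have ec : psize (s1val c) = psize (s1val c').
  case: (ltngtP (psize (s1val c)) (psize (s1val c'))) => // h.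
    have hq : 0 < psize (s1val c) < psize (s1val c') by rewrite s1_pos h.
    by have := gd_glue_at c r; rewrite e (negbTE (gd_glue_lo r' hq)).
  have hq : 0 < psize (s1val c') < psize (s1val c) by rewrite s1_pos h.
  by have := gd_glue_at c' r'; rewrite -e (negbTE (gd_glue_lo r hq)).
have e1 : s1val c = s1val c'.
  by rewrite -(stP_take_ovlP (s1val c) (glue r)) -[in RHS](stP_take_ovlP (s1val c') (glue r')) -ec; congr stP; congr take; exact: (congr1 pseq e).
have e2 : glue r = glue r'.
  by rewrite -(stP_drop_ovlP (s1val c) (glue r)) -[in RHS](stP_drop_ovlP (s1val c') (glue r')) -ec; congr stP; congr drop; exact: (congr1 pseq e).
by rewrite (IH _ e2); congr (_ :: _); apply: val_inj.
Qed.

Lemma glue_surj u : exists ws, glue ws = u.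
Proof.
suff : forall n (u : Perm), psize u <= n -> exists ws, glue ws = u by move/(_ _ u (leqnn _)).
elim=> [|n IH] {}u hu.
  by exists [::]; rewrite (@psize0 u) //; apply/eqP; rewrite -leqn0.
case: (posnP (psize u)) => [h0|pos]; first by exists [::]; rewrite (psize0 h0).
have gn : gd (pseq u) (psize u) by exact: gdn.
have exP : exists p, (0 < p) && gd (pseq u) p by exists (psize u); rewrite pos gn.
case: (ex_minnP exP) => p /andP[p0 gp] pmin.
set c := stP (take p (pseq u)); set x := stP (drop p (pseq u)).
have hpu : p <= psize u by apply: pmin; rewrite pos gn.
have szc : psize c = p by rewrite psize_stP ?perm_take_uniq // size_takel.
have ux : ovlP c x = u := ovlP_gd gp.
have c1 : kdeg c == 1.
  apply/kdeg1P; split; first by rewrite szc.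
  move=> q /andP[q0 qc]; rewrite szc in qc.
  have : gd (pseq (ovlP c x)) q = gd (pseq c) q.
    by rewrite /= gd_ovl_l ?pseqP // -/(psize c) szc ltnW.
  rewrite ux => <-; apply/negP => g; have := pmin q; rewrite q0 g => /(_ isT).
  by rewrite leqNgt qc.
have [ws hws] : exists ws, glue ws = x.
  apply: IH; rewrite psize_stP ?perm_drop_uniq // size_drop -/(psize u); lia.
by exists (MkS1 c1 :: ws); rewrite /glue /= -/(glue ws) hws.
Qed.

Lemma glue_surjb u : exists ws, glue ws == u.
Proof. by case: (glue_surj u) => ws e; exists ws; rewrite e. Qed.

Definition word (u : Perm) : seq S1 := xchoose (glue_surjb u).

Lemma glue_word u : glue (word u) = u.
Proof. exact/eqP/(xchooseP (glue_surjb u)). Qed.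

Lemma word_glue ws : word (glue ws) = ws.
Proof. by apply: glue_inj; rewrite glue_word. Qed.

Lemma word_inj : injective word.
Proof. by move=> u v e; rewrite -(glue_word u) e glue_word. Qed.

Lemma glue_cat xs ys : glue (xs ++ ys) = ovlP (glue xs) (glue ys).
Proof.
elim: xs => [|c xs IH]; first by apply/val_inj.
by rewrite cat_cons /glue /= -!/(glue _) IH; apply/val_inj; rewrite /= ovlA.
Qed.
Lemma iota_shift m k : iota m k = map (addn m) (iota 0 k).
Proof. by rewrite -iotaDl addn0. Qed.

Lemma gd_filter_glue ws :
  filter (gd (pseq (glue ws))) (iota 0 (psize (glue ws)).+1) =
  [seq psize (glue (take i ws)) | i <- iota 0 (size ws).+1].
Proof.
elim: ws => [|c ws IH]; first by [].
rewrite psize_glue_cons -addnS iotaD add0n filter_cat.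
have -> : filter (gd (pseq (glue (c :: ws)))) (iota 0 (psize (s1val c))) = [:: 0].
  have := s1_pos c; case: (psize (s1val c)) (@gd_glue_lo c ws) => [//|k] hlo _.
  rewrite -[iota 0 k.+1]/(0 :: iota 1 k) /= gd0; congr (_ :: _).
  rewrite (eq_in_filter (a2 := pred0)) ?filter_pred0 // => q.
  by rewrite mem_iota add1n => /andP[q0 qk]; apply/negbTE/hlo; rewrite q0 ltnS.
rewrite (iota_shift (psize (s1val c))) filter_map.
rewrite (eq_in_filter (a2 := gd (pseq (glue ws)))); last first.
  move=> q; rewrite mem_iota add0n ltnS => hq /=.
  by rewrite gd_ovl_r ?pseqP.
have e : iota 0 (size ws).+2 = 0 :: map (addn 1) (iota 0 (size ws).+1) by rewrite -iota_shift.
rewrite IH e map_cons cat1s; congr (_ :: _); rewrite -!map_comp; apply/eq_map => i /=.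
by rewrite psize_glue_cons.
Qed.

Lemma kdeg_glue ws : kdeg (glue ws) = size ws.
Proof.
by rewrite kdeg_count -size_filter gd_filter_glue size_map size_iota.
Qed.

Lemma kdeg_word u : kdeg u = size (word u).
Proof. by rewrite -{1}(glue_word u) kdeg_glue. Qed.

Lemma stP_take_glue ws i :
  stP (take (psize (glue (take i ws))) (pseq (glue ws))) = glue (take i ws).
Proof. by rewrite -{2}(cat_take_drop i ws) glue_cat stP_take_ovlP. Qed.

Lemma stP_drop_glue ws i :
  stP (drop (psize (glue (take i ws))) (pseq (glue ws))) = glue (drop i ws).
Proof. by rewrite -{2}(cat_take_drop i ws) glue_cat stP_drop_ovlP. Qed.
Section LinAlg.
Local Open Scope ring_scope.

Definition islin (K : choiceType) (V : lmodType rat) (L : {malg rat[K]} -> V) :=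
  (forall x y, L (x + y) = L x + L y) /\ (forall (c : rat) x, L (c *: x) = c *: L x).

Lemma malgUZ (K : choiceType) (c : rat) (k : K) : << c *g k >> = c *: << k >>.
Proof. by apply/malgP => k'; rewrite mcoeffZ !mcoeffU mulr_natr. Qed.

Lemma mcoeffU1' (K : choiceType) (k k' : K) : (<< k >> : {malg rat[K]})@_k' = (k == k')%:R.
Proof. by rewrite mcoeffU. Qed.

Lemma msuppU1' (K : choiceType) (k : K) : msupp (<< k >> : {malg rat[K]}) = [fset k]%fset.
Proof. by rewrite msuppU oner_eq0. Qed.

Variables (K : choiceType) (V : lmodType rat).
Implicit Types (f : K -> V) (x y : {malg rat[K]}).

Lemma lin_extEw f x (d : {fset K}) : (msupp x `<=` d)%fset ->
  lin_ext f x = \sum_(k <- d) x@_k *: f k.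
Proof.
move=> le; rewrite /lin_ext (big_fset_incl _ le) // => k _ /mcoeff_outdom ->.
by rewrite scale0r.
Qed.

Lemma lin_extD f x y : lin_ext f (x + y) = lin_ext f x + lin_ext f y.
Proof.
set d := (msupp x `|` msupp y)%fset.
rewrite (@lin_extEw _ (x + y) d) ?msuppD_le // (@lin_extEw _ x d) ?fsubsetUl //.
rewrite (@lin_extEw _ y d) ?fsubsetUr // -big_split /=.
by apply: eq_bigr => k _; rewrite mcoeffD scalerDl.
Qed.

Lemma lin_extZ f c x : lin_ext f (c *: x) = c *: lin_ext f x.
Proof.
rewrite (@lin_extEw _ (c *: x) (msupp x)) ?msuppZ_le // /lin_ext scaler_sumr.
by apply: eq_bigr => k _; rewrite mcoeffZ scalerA.
Qed.

Lemma lin_ext0 f : lin_ext f 0 = 0.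
Proof. by rewrite /lin_ext msupp0 big_nil. Qed.

Lemma lin_extU f k : lin_ext f << k >> = f k.
Proof. by rewrite /lin_ext msuppU1' big_seq_fset1 mcoeffUU scale1r. Qed.

Lemma lin_ext_lin f : islin (lin_ext f).
Proof. by split; [exact: lin_extD | exact: lin_extZ]. Qed.

Lemma islin0 (L : {malg rat[K]} -> V) : islin L -> L 0 = 0.
Proof. by case=> _ hZ; rewrite -(scale0r (0 : {malg rat[K]})) hZ scale0r. Qed.

Lemma islin_sum (L : {malg rat[K]} -> V) (I : Type) (r : seq I) (P : pred I) G :
  islin L -> L (\sum_(i <- r | P i) G i) = \sum_(i <- r | P i) L (G i).
Proof.
move=> hL; apply: (big_morph L (proj1 hL)); exact: islin0.
Qed.

Lemma linE (L : {malg rat[K]} -> V) : islin L -> forall x, L x = lin_ext (fun k => L << k >>) x.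
Proof.
move=> hL x; rewrite {1}(monalgE x) islin_sum // /lin_ext.
by apply: eq_bigr => k _; rewrite malgUZ (proj2 hL).
Qed.

Lemma lin_eq (L1 L2 : {malg rat[K]} -> V) : islin L1 -> islin L2 ->
  (forall k, L1 << k >> = L2 << k >>) -> forall x, L1 x = L2 x.
Proof.
move=> h1 h2 e x; rewrite (linE h1) (linE h2) /lin_ext.
by apply: eq_bigr => k _; rewrite e.
Qed.

End LinAlg.

Lemma islin_comp (K1 K2 : choiceType) (V : lmodType rat)
  (L1 : {malg rat[K1]} -> {malg rat[K2]}) (L2 : {malg rat[K2]} -> V) :
  islin L1 -> islin L2 -> islin (L2 \o L1).
Proof.
move=> [a1 b1] [a2 b2]; split => [x y|c x] /=; first by rewrite a1 a2.
by rewrite b1 b2.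
Qed.

Section Tens.
Local Open Scope ring_scope.
Variables (K1 K2 : choiceType).

Lemma tensE (x : {malg rat[K1]}) (y : {malg rat[K2]}) :
  tens x y = lin_ext (fun a => lin_ext (fun b => << (a, b) >>) y) x.
Proof.
rewrite /tens /lin_ext; apply: eq_bigr => a _; rewrite scaler_sumr.
by apply: eq_bigr => b _; rewrite malgUZ scalerA.
Qed.

Lemma tens_linl y : islin (fun x => @tens K1 K2 x y).
Proof.
split => [x1 x2|c x] /=; rewrite !tensE; [exact: lin_extD | exact: lin_extZ].
Qed.

Lemma tens_linr x : islin (fun y => @tens K1 K2 x y).
Proof.
split => [y1 y2|c y] /=; rewrite !tensE !(@lin_extEw _ _ _ x (msupp x)) //.
  by rewrite -big_split /=; apply: eq_bigr => a _; rewrite lin_extD scalerDr.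
by rewrite scaler_sumr; apply: eq_bigr => a _; rewrite lin_extZ !scalerA mulrC.
Qed.

Lemma tensUU (a : K1) (b : K2) : tens << a >> << b >> = << (a, b) >>.
Proof. by rewrite tensE !lin_extU. Qed.

Lemma tens_suml (I : Type) (r : seq I) (P : pred I) (G : I -> {malg rat[K1]}) (y : {malg rat[K2]}) :
  tens (\sum_(i <- r | P i) G i) y = \sum_(i <- r | P i) tens (G i) y.
Proof. exact: (islin_sum _ _ _ (tens_linl y)). Qed.

Lemma tens_sumr (I : Type) (r : seq I) (P : pred I) (G : I -> {malg rat[K2]}) (x : {malg rat[K1]}) :
  tens x (\sum_(i <- r | P i) G i) = \sum_(i <- r | P i) tens x (G i).
Proof. exact: (islin_sum _ _ _ (tens_linr x)). Qed.

End Tens.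

Lemma tmap_lin (K1 K2 L1 L2 : choiceType) f g :
  islin (@tmap K1 K2 L1 L2 f g).
Proof. exact: lin_ext_lin. Qed.

Lemma tmapU (K1 K2 L1 L2 : choiceType) f g (ab : K1 * K2) :
  @tmap K1 K2 L1 L2 f g << ab >>%R = tens (f << ab.1 >>%R) (g << ab.2 >>%R).
Proof. exact: lin_extU. Qed.
Section Bij.
Local Open Scope ring_scope.

Lemma bij_sum (V : nmodType) (H : Perm -> Perm -> V) (u : Perm) p : (p <= psize u)%N ->
  \sum_(w <- perms_of (psize u) | weak_le u w && gd (pseq w) p)
     H (stP (take p (pseq w))) (stP (drop p (pseq w))) =
  \sum_(a <- perms_of p | weak_le (stP (take p (pseq u))) a)
    \sum_(b <- perms_of (psize u - p)%N | weak_le (stP (drop p (pseq u))) b) H a b.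
Proof.
move=> hp; set A := stP (take p (pseq u)); set B := stP (drop p (pseq u)).
set ra := [seq a <- perms_of p | weak_le A a].
set rb := [seq b <- perms_of (psize u - p)%N | weak_le B b].
set pairs := [seq (a, b) | a <- ra, b <- rb].
set H' := fun w : Perm => H (stP (take p (pseq w))) (stP (drop p (pseq w))).
have memra a : (a \in ra) = (psize a == p) && weak_le A a by rewrite mem_filter mem_perms andbC.
have memrb b : (b \in rb) = (psize b == (psize u - p)%N)%N && weak_le B b by rewrite mem_filter mem_perms andbC.
transitivity (\sum_(w <- [seq ovlP ab.1 ab.2 | ab <- pairs]) H' w); last first.
  rewrite big_map big_allpairs_dep /= -[RHS]big_filter -/ra.
  apply: eq_big_seq => a; rewrite memra => /andP[/eqP sa _].
  rewrite -[RHS]big_filter -/rb; apply: eq_big_seq => b _ /=.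
  by rewrite /H' -{1}sa stP_take_ovlP -sa stP_drop_ovlP.
rewrite -big_filter; apply: perm_big; apply: uniq_perm.
- exact/filter_uniq/uniq_perms.
- rewrite map_inj_in_uniq.
    apply: allpairs_uniq; try exact/filter_uniq/uniq_perms.
    by move=> [a b] [c d] _ _ /= [-> ->].
  move=> [a b] [c d] /allpairsP[[a' b'] [/= ha _ [-> ->]]].
  move=> /allpairsP[[c' d'] [/= hc _ [-> ->]]] /= e.
  move: ha hc; rewrite !memra => /andP[/eqP sa _] /andP[/eqP sc _].
  have ea : a' = c' by rewrite -(stP_take_ovlP a' b') e sa -sc stP_take_ovlP.
  have eb : b' = d' by rewrite -(stP_drop_ovlP a' b') e sa -sc stP_drop_ovlP.
  by rewrite ea eb.
move=> w; rewrite mem_filter mem_perms; apply/andP/mapP.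
  move=> [/andP[le g] /eqP sw].
  have sa : psize (stP (take p (pseq w))) = p.
    by rewrite psize_stP ?perm_take_uniq // size_takel // -/(psize w) sw.
  have sb : psize (stP (drop p (pseq w))) = (psize u - p)%N.
    by rewrite psize_stP ?perm_drop_uniq // size_drop -/(psize w) sw.
  have ew := ovlP_gd g.
  exists (stP (take p (pseq w)), stP (drop p (pseq w))); last by rewrite ew.
  apply/allpairsP; exists (stP (take p (pseq w)), stP (drop p (pseq w))); split => //=.
  - rewrite memra sa eqxx /=.
    move: le; rewrite -{1}ew weak_le_ovl; first by rewrite sa => /andP[].
    by rewrite sa sb subnKC // -sw.
  - rewrite memrb sb eqxx /=.
    move: le; rewrite -{1}ew weak_le_ovl; first by rewrite sa => /andP[].
    by rewrite sa sb subnKC // -sw.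
move=> [[a b] /allpairsP[[a' b'] [/= ha hb [-> ->]]] ->] /=.
move: ha hb; rewrite memra memrb => /andP[/eqP sa la] /andP[/eqP sb lb].
rewrite psize_ovlP sa sb subnKC // eqxx; split => //.
rewrite weak_le_ovl; last by rewrite sa sb subnKC.
rewrite sa la lb /=.
have := gd_ovl_r (q := 0) (pseqP a') (pseqP b') (leq0n _).
by rewrite addn0 -/(psize a') sa gd0 => ->.
Qed.

End Bij.
Section Phi.
Local Open Scope ring_scope.

Definition phiB (u : Perm) : QV :=
  \sum_(w <- perms_of (psize u) | weak_le u w) << word w >>.
Definition phi (x : SSym) : QV := lin_ext phiB x.
Definition psi (y : QV) : SSym := lin_ext (fun w => Defs.M (glue w)) y.

Lemma phi_lin : islin phi. Proof. exact: lin_ext_lin. Qed.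
Lemma psi_lin : islin psi. Proof. exact: lin_ext_lin. Qed.
Lemma phiU u : phi << u >> = phiB u. Proof. exact: lin_extU. Qed.

Lemma mcoeff_sum (K : choiceType) (I : Type) (r : seq I) (P : pred I)
   (G : I -> {malg rat[K]}) k :
  (\sum_(i <- r | P i) G i)@_k = \sum_(i <- r | P i) (G i)@_k.
Proof. by apply: (big_morph (mcoeff k)) => [x y|]; rewrite ?mcoeffD ?mcoeff0. Qed.

Lemma phiM u : phi (Defs.M u) = << word u >>.
Proof.
rewrite /Defs.M islin_sum; last exact: phi_lin.
set r := perms_of (psize u).
have uin : u \in r by rewrite mem_perms.
transitivity (\sum_(v <- r | weak_le u v) \sum_(w <- r | weak_le v w)
                 mobius u v *: (<< word w >> : QV)).
  apply: eq_bigr => v le; rewrite (proj2 phi_lin) /F phiU /phiB scaler_sumr.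
  by rewrite -(weak_le_size le).
rewrite (exchange_big_dep xpredT) //=.
transitivity (\sum_(w <- r) (u == w)%:R *: (<< word w >> : QV)); last first.
  rewrite (bigD1_seq u) ?uniq_perms //= eqxx scale1r big1 ?addr0 // => w nw.
  by rewrite eq_sym (negbTE nw) scale0r.
apply: eq_big_seq => w; rewrite mem_perms => /eqP sw.
rewrite -scaler_suml; congr (_ *: _).
case: (boolP (weak_le u w)) => le.
  by rewrite -(mobius_rec le) sw.
rewrite big1; last first.
  by move=> v /andP[l1 l2]; move: le; rewrite (weak_le_trans l1 l2).
by case: eqP le => // <-; rewrite weak_le_refl.
Qed.

Lemma phiB_coef u v : (phiB u)@_(word v) = (weak_le u v)%:R.
Proof.
rewrite /phiB mcoeff_sum.
under eq_bigr => w _ do rewrite mcoeffU1' (inj_eq word_inj).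
case: (boolP (weak_le u v)) => le.
  have vin : v \in perms_of (psize u) by rewrite mem_perms (weak_le_size le).
  rewrite (bigD1P _ vin) ?uniq_perms // eqxx big1 ?addr0 // => w /andP[_ nw].
  by rewrite (negbTE nw).
rewrite big1 // => w lw; case: eqP => // ew.
by move: le; rewrite -ew lw.
Qed.

Lemma phi_coef x k : (phi x)@_k = \sum_(u <- msupp x) x@_u * (phiB u)@_k.
Proof. by rewrite /phi /lin_ext mcoeff_sum; apply: eq_bigr => u _; rewrite mcoeffZ. Qed.

Lemma phi_inj0 x : phi x = 0 -> x = 0.
Proof.
move=> h.
suff nz : forall v, v \in msupp x -> False.
  apply/malgP => k; rewrite mcoeff0.
  by case: (boolP (k \in msupp x)) => [/nz []|/mcoeff_outdom].
move=> v0 vx0.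
have exP : exists m, has (fun v => size (Defs.inv (pseq v)) == m) (msupp x).
  by exists (size (Defs.inv (pseq v0))); apply/hasP; exists v0.
case: (ex_minnP exP) => m /hasP[v vx /eqP em] mmin.
have := congr1 (mcoeff (word v)) h; rewrite phi_coef mcoeff0.
rewrite (bigD1_seq v) ?fset_uniq //= phiB_coef weak_le_refl mulr1.
rewrite big_seq_cond big1 ?addr0; first by move/eqP; rewrite mcoeff_eq0 vx.
move=> w /andP[wx nw]; rewrite phiB_coef; case: (boolP (weak_le w v)) => le; last by rewrite mulr0.
have := weak_le_lt le nw; rewrite em ltnNge => /negP; case.
by apply: mmin; apply/hasP; exists w.
Qed.
End Phi.
Section Phi2.
Local Open Scope ring_scope.

Lemma phi_psi y : phi (psi y) = y.
Proof.
rewrite /psi /lin_ext islin_sum; last exact: phi_lin.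
rewrite [RHS](monalgE y); apply: eq_bigr => w _.
rewrite (proj2 phi_lin) phiM word_glue; exact/esym/malgUZ.
Qed.

Lemma psi_phi x : psi (phi x) = x.
Proof.
have h : phi (psi (phi x) + (-1) *: x) = 0.
  by rewrite (proj1 phi_lin) (proj2 phi_lin) phi_psi scaleN1r subrr.
have := phi_inj0 h; rewrite scaleN1r => /eqP; rewrite subr_eq0 => /eqP.
by [].
Qed.

Lemma QGrP k (y : QV) : QGr k y <-> (forall w, size w != k -> y@_w = 0).
Proof.
split => [h w nw|h w wy].
  case: (boolP (w \in msupp y)) => [/h e|/mcoeff_outdom //].
  by move: nw; rewrite e eqxx.
apply/eqP; apply: contraTT wy => nw.
by rewrite -mcoeff_eq0 h.
Qed.

Lemma gr_phi k x : SSymGr k x -> QGr k (phi x).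
Proof.
case=> s [c [hs ->]]; apply/QGrP => w nw.
rewrite islin_sum; last exact: phi_lin.
rewrite mcoeff_sum big_seq big1 // => u us.
rewrite (proj2 phi_lin) phiM mcoeffZ mcoeffU1'.
case: eqP => [ew|]; last by rewrite mulr0.
by move: nw; rewrite -ew -kdeg_word (eqP (allP hs u us)) eqxx.
Qed.

Lemma gr_psi k y : QGr k y -> SSymGr k (psi y).
Proof.
move=> /QGrP hy; exists (map glue (msupp y)), (fun u => y@_(word u)); split.
  apply/allP => u /mapP[w wy ->]; rewrite kdeg_glue.
  by apply/eqP; apply: contraTeq wy => nw; rewrite -mcoeff_eq0 hy.
by rewrite big_map /psi /lin_ext; apply: eq_bigr => w _; rewrite word_glue.
Qed.

Lemma gr_iff k x : SSymGr k x <-> QGr k (phi x).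
Proof.
split; first exact: gr_phi.
by move/gr_psi; rewrite psi_phi.
Qed.

Lemma sum_coef_pred1 (K : choiceType) (x : {malg rat[K]}) (k : K) :
  \sum_(u <- msupp x) x@_u * (u == k)%:R = x@_k.
Proof.
case: (boolP (k \in msupp x)) => kx.
  rewrite (bigD1_seq k) ?fset_uniq //= eqxx mulr1 big1 ?addr0 // => u nu.
  by rewrite (negbTE nu) mulr0.
rewrite (mcoeff_outdom kx) big_seq big1 // => u ux.
by case: eqP ux kx => [->-> //|]; rewrite mulr0.
Qed.

Lemma eps_phi x : epsQ (phi x) = epsS x.
Proof.
rewrite /epsQ /epsS -(word_glue [::]) phi_coef -sum_coef_pred1.
apply: eq_bigr => u _; rewrite phiB_coef; congr (_ * _%:R).
rewrite [glue [::]]/=; congr nat_of_bool.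
apply/idP/eqP => [le|->]; last exact: weak_le_refl.
by apply: psize0; rewrite (weak_le_size le).
Qed.

Lemma cop_glue ws : copQ_basis ws =
  \sum_(p <- iota 0 (psize (glue ws)).+1 | gd (pseq (glue ws)) p)
     << (word (stP (take p (pseq (glue ws)))), word (stP (drop p (pseq (glue ws))))) >>.
Proof.
rewrite /copQ_basis -(big_mkord (fun _ => true) (fun i => (<< (take i ws, drop i ws) >> : QV2))) -[RHS]big_filter gd_filter_glue big_map /index_iota subn0.
by apply: eq_bigr => i _; rewrite stP_take_glue stP_drop_glue !word_glue.
Qed.

Lemma cop_word w : copQ_basis (word w) =
  \sum_(p <- iota 0 (psize w).+1 | gd (pseq w) p)
     << (word (stP (take p (pseq w))), word (stP (drop p (pseq w)))) >>.
Proof. by rewrite cop_glue glue_word. Qed.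

Lemma copQ_lin : islin copQ. Proof. exact: lin_ext_lin. Qed.
Lemma copS_lin : islin copS. Proof. exact: lin_ext_lin. Qed.

Lemma big_ord_iota (V : nmodType) n (G : nat -> V) :
  \sum_(i < n) G i = \sum_(i <- iota 0 n) G i.
Proof. by rewrite -(big_mkord (fun _ => true) G) /index_iota subn0. Qed.

Lemma cop_basis u : copQ (phi << u >>) = tmap phi phi (copS << u >>).
Proof.
rewrite phiU /phiB islin_sum; last exact: copQ_lin.
rewrite /copS lin_extU /copS_basis islin_sum; last exact: tmap_lin.
under eq_bigr => w le do rewrite /copQ lin_extU cop_word -(weak_le_size le).
rewrite (exchange_big_dep xpredT) // -(big_mkord (fun _ => true) (fun p => tmap phi phi (<< (stP (take p (pseq u)), stP (drop p (pseq u))) >> : SSym2))) /index_iota subn0.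
apply: eq_big_seq => p; rewrite mem_iota add0n ltnS => hp.
rewrite tmapU /= !phiU /phiB tens_suml.
rewrite (bij_sum (fun a b => << (word a, word b) >> : QV2) hp).
rewrite psize_stP ?perm_take_uniq // size_takel //.
apply: eq_bigr => a _; rewrite tens_sumr.
rewrite psize_stP ?perm_drop_uniq // size_drop.
by apply: eq_bigr => b _; rewrite tensUU.
Qed.

Lemma cop_phi x : copQ (phi x) = tmap phi phi (copS x).
Proof.
apply: (lin_eq (L1 := copQ \o phi) (L2 := tmap phi phi \o copS)) => //.
- exact: islin_comp phi_lin copQ_lin.
- exact: islin_comp copS_lin (tmap_lin _ _).
exact: cop_basis.
Qed.
End Phi2.
Section Final.
Local Open Scope ring_scope.

Definition proj k (y : QV) : QV := \sum_(w <- msupp y | size w == k) y@_w *: << w >>.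

Lemma proj_gr k y : QGr k (proj k y).
Proof.
apply/QGrP => w nw; rewrite mcoeff_sum big1 // => w' /eqP sw.
rewrite mcoeffZ mcoeffU1'; case: eqP => [e|]; last by rewrite mulr0.
by move: nw; rewrite -e sw eqxx.
Qed.

Lemma proj_sum (y : QV) K : (forall w, w \in msupp y -> (size w < K)%N) ->
  \sum_(k <- iota 0 K) proj k y = y.
Proof.
move=> hK; rewrite /proj (exchange_big_dep xpredT) //=.
rewrite [RHS](monalgE y); apply: eq_big_seq => w wy.
have win : size w \in iota 0 K by rewrite mem_iota add0n hK.
rewrite (bigD1P _ win) ?iota_uniq ?eqxx // big1 ?addr0; first exact/esym/malgUZ.
by move=> k /andP[/eqP -> ]; rewrite eqxx.
Qed.

Lemma islin_compf (K1 K2 : choiceType) (V : lmodType rat)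
  (L1 : {malg rat[K1]} -> {malg rat[K2]}) (L2 : {malg rat[K2]} -> V) :
  islin L1 -> islin L2 -> islin (fun x => L2 (L1 x)).
Proof. exact: islin_comp. Qed.

Lemma tmap_tens (K1 K2 L1 L2 : choiceType) f g (P : {malg rat[K1]}) (Q : {malg rat[K2]}) :
  islin f -> islin g -> @tmap K1 K2 L1 L2 f g (tens P Q) = tens (f P) (g Q).
Proof.
move=> hf hg.
have h1 : forall a : K1, tmap f g (tens << a >> Q) = tens (f << a >>) (g Q).
  move=> a; apply: (lin_eq (L1 := fun Q => tmap f g (tens << a >> Q))
                           (L2 := fun Q => tens (f << a >>) (g Q))).
  - exact: (islin_compf (tens_linr _ _) (tmap_lin _ _)).
  - exact: (islin_compf hg (tens_linr _ _)).
  by move=> b; rewrite tensUU tmapU.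
apply: (lin_eq (L1 := fun P => tmap f g (tens P Q)) (L2 := fun P => tens (f P) (g Q))) => //.
- exact: (islin_compf (tens_linl _ _) (tmap_lin _ _)).
- exact: (islin_compf hf (tens_linl _ _)).
Qed.

Lemma tmap_psiphi (z : SSym2) : tmap psi psi (tmap phi phi z) = z.
Proof.
apply: (lin_eq (L1 := fun z => tmap psi psi (tmap phi phi z)) (L2 := fun z => z)).
- exact: islin_compf (tmap_lin _ _) (tmap_lin _ _).
- by split.
move=> [a b]; rewrite tmapU tmap_tens; [|exact: psi_lin|exact: psi_lin].
by rewrite /= !psi_phi tensUU.
Qed.

End Final.

Lemma part1 (x : SSym) : exists s : seq SSym,
      x = (\sum_(y <- s) y)%R /\
      forall i, (i < size s)%N -> SSymGr i (nth 0%R s i).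
Proof.
set y := phi x; set K := (\max_(w <- msupp y) size w).+1.
exists [seq psi (proj k y) | k <- iota 0 K]; split.
  rewrite big_map -islin_sum; last exact: psi_lin.
  rewrite proj_sum ?psi_phi // => w wy.
  by rewrite ltnS (leq_bigmax_seq (F := size) w wy).
move=> i; rewrite size_map size_iota => hi.
rewrite (nth_map 0%N) ?size_iota // nth_iota // add0n.
by apply/gr_iff; rewrite phi_psi; exact: proj_gr.
Qed.

Lemma part2 (s : seq SSym) :
  (forall i, (i < size s)%N -> SSymGr i (nth 0%R s i)) ->
  (\sum_(y <- s) y)%R = 0%R -> forall i, nth 0%R s i = 0%R.
Proof.
move=> hs hsum i; case: (ltnP i (size s)) => hi; last by rewrite nth_default.
apply: phi_inj0; apply/malgP => w; rewrite mcoeff0.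
have hq : forall j, (j < size s)%N -> QGr j (phi (nth 0%R s j)) by move=> j /hs /gr_phi.
case: (eqVneq (size w) i) => [ew|nw]; last by apply: (proj1 (QGrP _ _) (hq i hi)).
have := congr1 (mcoeff w) (congr1 phi hsum).
rewrite islin_sum; last exact: phi_lin.
rewrite (islin0 phi_lin) mcoeff0 mcoeff_sum (big_nth 0%R) /index_iota subn0.
have iin : i \in iota 0 (size s) by rewrite mem_iota.
rewrite (bigD1P _ iin) ?iota_uniq // big_seq_cond big1 ?addr0 //.
move=> j /andP[jin /andP[_ nj]]; move: jin; rewrite mem_iota add0n => hj.
by apply: (proj1 (QGrP _ _) (hq j hj)); rewrite ew eq_sym.
Qed.

Lemma part3 (k : nat) (x : SSym) : SSymGr k x ->
      exists t : seq (nat * SSym * SSym),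
        copS x = (\sum_(abc <- t) tens abc.1.2 abc.2)%R /\
        forall abc, abc \in t ->
          [/\ (abc.1.1 <= k)%N, SSymGr abc.1.1 abc.1.2 & SSymGr (k - abc.1.1) abc.2].
Proof.
move=> hx; set y := phi x; have hy : QGr k y := gr_phi hx.
exists [seq (i, y@_w *: psi << take i w >>, psi << drop i w >>)%R
          | w <- msupp y, i <- iota 0 (size w).+1]; split.
  rewrite -(tmap_psiphi (copS x)) -cop_phi -/y.
  rewrite big_allpairs_dep /copQ /lin_ext islin_sum; last exact: tmap_lin.
  apply: eq_bigr => w _; rewrite (proj2 (tmap_lin _ _)) /copQ_basis.
  rewrite -(big_mkord (fun _ => true) (fun i => (<< (take i w, drop i w) >>%R : QV2))).
  rewrite /index_iota subn0 (islin_sum (L := tmap psi psi)); last exact: tmap_lin.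
  rewrite scaler_sumr; apply: eq_bigr => i _ /=.
  by rewrite tmapU /= (proj2 (tens_linl _ _)).
move=> abc /allpairsPdep[w [i [wy hi ->]]] /=.
have sw := hy w wy; move: hi; rewrite mem_iota add0n ltnS sw => hi.
split => //.
- apply/gr_iff; rewrite (proj2 phi_lin) phi_psi; apply/QGrP => w' nw'.
  rewrite mcoeffZ mcoeffU1'; case: eqP => [e|]; last by rewrite GRing.mulr0.
  by move: nw'; rewrite -e size_takel ?sw // eqxx.
- apply/gr_iff; rewrite phi_psi; apply/QGrP => w' nw'.
  rewrite mcoeffU1'; case: eqP => // e.
  by move: nw'; rewrite -e size_drop sw eqxx.
Qed.

Theorem mainTheorem10 :
  (* SSym = (+)_k (SSym)^k : every element decomposes ... *)
  (forall x : SSym, exists s : seq SSym,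
      x = (\sum_(y <- s) y)%R /\
      forall i, (i < size s)%N -> SSymGr i (nth 0%R s i)) /\
  (* ... and the sum is direct *)
  (forall s : seq SSym,
      (forall i, (i < size s)%N -> SSymGr i (nth 0%R s i)) ->
      (\sum_(y <- s) y)%R = 0%R -> forall i, nth 0%R s i = 0%R) /\
  (* coalgebra grading: Delta((SSym)^k) in (+)_{i<=k} (SSym)^i (x) (SSym)^(k-i) *)
  (forall (k : nat) (x : SSym), SSymGr k x ->
      exists t : seq (nat * SSym * SSym),
        copS x = (\sum_(abc <- t) tens abc.1.2 abc.2)%R /\
        forall abc, abc \in t ->
          [/\ (abc.1.1 <= k)%N, SSymGr abc.1.1 abc.1.2 & SSymGr (k - abc.1.1) abc.2]) /\
  (* graded coalgebra isomorphism with the cofree coalgebra Q(V), V = (SSym)^1 *)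
  (exists phi : SSym -> QV,
      linear phi /\ bijective phi /\
      (forall (k : nat) (x : SSym), SSymGr k x <-> QGr k (phi x)) /\
      (forall x : SSym, copQ (phi x) = tmap phi phi (copS x)) /\
      (forall x : SSym, epsQ (phi x) = epsS x)).
Proof.
split; first exact: part1.
split; first exact: part2.
split; first exact: part3.
exists phi; split.
  by move=> a u v; rewrite (proj1 phi_lin) (proj2 phi_lin).
split; first by exists psi; [exact: psi_phi | exact: phi_psi].
split; first exact: gr_iff.
split; first exact: cop_phi.
exact: eps_phi.
Qed.
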